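(* Let $\ell\ge2$ and $k\ge1$, and let $\lambda$ be an $\ell$-core with exactly $k$ nonzero parts. Then: (1) in each row of $\lambda$, exactly one of the boxes deleted in forming $\widetilde{\Phi_\ell^k}(\lambda)$ is a skew box of $\lambda$ with respect to $\ell$; (2) if $\mathsf{B}$ is a box of $\lambda$ that is not deleted, and $\widetilde{\mathsf{B}}$ is the corresponding box of $\widetilde{\Phi_\ell^k}(\lambda)$, then $\mathsf{B}$ is a skew box of $\lambda$ with respect to $\ell$ if and only if $\widetilde{\mathsf{B}}$ is a skew box of $\widetilde{\Phi_\ell^k}(\lambda)$ with respect to $\ell-1$.
   Context: Partitions are in English notation; box $(x,y)$ is in row $x$, column $y$. The hook length $h^\mu_{\mathsf{B}}$ of a box $\mathsf{B}=(a,c)$ of $\mu$ is the number of boxes of $\mu$ in row $a$ weakly right of $\mathsf{B}$ plus the number in column $c$ strictly below $\mathsf{B}$. An $m$-core is a partition none of whose hook lengths is divisible by $m$. For a partition $\mu$ and integer $m$, a box $\mathsf{B}$ of $\mu$ is a skew box with respect to $m$ if $h^\mu_{\mathsf{B}}\le m$ (i.e. it is not among the boxes of hook length $>m$). For an $\ell$-core $\lambda$ with $k$ nonzero parts, $\widetilde{\Phi_\ell^k}(\lambda)$ is obtained from the diagram of $\lambda$ by deleting every column $y$ with $h^\lambda_{(1,y)}\equiv h^\lambda_{(1,1)}\pmod\ell$ (in particular column 1) and shifting the remaining columns left, preserving their order; each non-deleted box $\mathsf{B}$ of $\lambda$ thereby corresponds to a box $\widetilde{\mathsf{B}}$ of $\widetilde{\Phi_\ell^k}(\lambda)$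 in the same row. Equivalently, $\widetilde{\Phi_\ell^k}(\lambda)$ is the transpose of $\Phi_\ell^k(\lambda^{tr})$, where for an $\ell$-core $\nu$ with first part $k$, $\Phi_\ell^k(\nu)$ deletes all rows $x$ of $\nu$ with $h^\nu_{(x,1)}\equiv h^\nu_{(1,1)}\pmod\ell$. It is known that $\widetilde{\Phi_\ell^k}(\lambda)$ is an $(\ell-1)$-core with at most $k$ nonzero parts. *)

(* Defs.v *)
From mathcomp Require Import all_boot.
Set Implicit Arguments. Unset Strict Implicit. Unset Printing Implicit Defensive.

(* A partition is a seq nat of its nonzero parts in weakly decreasing order.
   Rows and columns are indexed from 1 (English notation): box (x,y) is in
   row x, column y. *)
Definition is_partition (la : seq nat) : Prop :=
  sorted geq la /\ all (fun p => 0 < p) la.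

Definition row (la : seq nat) (x : nat) : nat := nth 0 la x.-1.

Definition col (la : seq nat) (y : nat) : nat := count (fun p => y <= p) la.

Definition is_box (la : seq nat) (x y : nat) : bool :=
  [&& 1 <= x, x <= size la, 1 <= y & y <= row la x].

Definition hook (la : seq nat) (x y : nat) : nat :=
  (row la x - y + 1) + (col la y - x).

Definition is_core (m : nat) (la : seq nat) : Prop :=
  forall x y, is_box la x y -> ~~ (m %| hook la x y).

Definition skew_box (m : nat) (la : seq nat) (x y : nat) : bool :=
  is_box la x y && (hook la x y <= m).

(* column y (1 <= y <= lambda_1) is deleted by Phi~_l^k *)
Definition deleted_col (l : nat) (la : seq nat) (y : nat) : bool :=
  [&& 1 <= y, y <= row la 1 & hook la 1 y == hook la 1 1 %[mod l]].

Definition new_col (l : nat) (la : seq nat) (y : nat) : nat :=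
  count (fun c => ~~ deleted_col l la c) (iota 1 y).

(* Phi~_l^k(lambda): delete the marked columns and shift left;
   rows that become empty are dropped (they are trailing). *)
Definition Phi_tilde (l : nat) (la : seq nat) : seq nat :=
  filter (fun p => 0 < p) [seq new_col l la p | p <- la].

(* Main.v *)
Require Import Defs.
From mathcomp Require Import all_boot zify.
Set Implicit Arguments. Unset Strict Implicit. Unset Printing Implicit Defensive.

Lemma sorted_cons_le (s : seq nat) a : sorted geq (a :: s) -> all (fun p => p <= a) s.
Proof.
have Ht : transitive geq by move=> b c d /= Hq1 Hq2; exact: leq_trans Hq2 Hq1.
by move=> H; have := order_path_min (leT:=geq) Ht H.
Qed.

Lemma count_nth_le (s : seq nat) y i : sorted geq s -> 1 <= y ->
  (i < count (fun p => y <= p) s) = (y <= nth 0 s i).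
Proof.
elim: s i => [|a s IH] i Hs Hy /=; first by rewrite nth_nil; case: y Hy.
have Hs' : sorted geq s by case: s Hs {IH} => //= b s /andP[].
have Hall := sorted_cons_le Hs.
case: (leqP y a) => Hya /=.
  case: i => [|j] /=; first by rewrite Hya.
  by rewrite add1n ltnS IH.
have -> : count (fun p => y <= p) s = 0.
  apply/eqP; rewrite -leqn0 leqNgt -has_count; apply/hasPn => p Hp.
  by rewrite -ltnNge; apply: leq_ltn_trans Hya; apply: (allP Hall).
case: i => [|j] /=; first by apply/esym/negbTE; rewrite -ltnNge.
have : nth 0 s j <= a.
  case: (ltnP j (size s)) => Hj; first by apply: (allP Hall); apply: mem_nth.
  by rewrite nth_default.
move=> Hn; apply/esym/negbTE; rewrite -ltnNge; exact: leq_ltn_trans Hn Hya.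
Qed.

Lemma col_row la x y : sorted geq la -> 1 <= x -> 1 <= y ->
  (x <= col la y) = (y <= row la x).
Proof.
move=> Hs Hx Hy; rewrite /col /row -count_nth_le //.
by case: x Hx.
Qed.

Lemma row_mono la x1 x2 : sorted geq la -> 1 <= x1 <= x2 -> row la x2 <= row la x1.
Proof.
move=> Hs /andP[H1 H2]; rewrite /row.
case: (ltnP x2.-1 (size la)) => Hx2; last by rewrite (nth_default _ Hx2).
have Ht : transitive geq by move=> b c d /= Hq1 Hq2; exact: leq_trans Hq2 Hq1.
have := @sorted_leq_nth _ geq Ht leqnn 0 la Hs x1.-1 x2.-1.
apply; rewrite ?inE //; try lia.
Qed.

Lemma col_mono la y1 y2 : y1 <= y2 -> col la y2 <= col la y1.
Proof. move=> H; apply: sub_count => p /= Hp; exact: leq_trans H Hp. Qed.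

Lemma col_size la y : col la y <= size la.
Proof. exact: count_size. Qed.

Lemma box_col la x y : sorted geq la -> is_box la x y -> x <= col la y.
Proof. by move=> Hs /and4P[H1 H2 H3 H4]; rewrite col_row. Qed.

Lemma box_of_col la x y : sorted geq la -> 1 <= x -> 1 <= y -> x <= col la y -> is_box la x y.
Proof.
move=> Hs H1 H2 H3; rewrite /is_box H1 H2 -col_row // H3 andbT /=.
have := col_size la y; lia.
Qed.

Lemma hook_row_lt la x y1 y2 : sorted geq la -> is_box la x y2 -> 1 <= y1 < y2 ->
  hook la x y2 < hook la x y1.
Proof.
move=> Hs Hb Hy; have := box_col Hs Hb; have := col_mono la (ltnW (proj2 (andP Hy))).
move: Hb; rewrite /is_box /hook; lia.
Qed.

Lemma hook_col_lt la x1 x2 y : sorted geq la -> is_box la x2 y -> 1 <= x1 < x2 ->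
  hook la x2 y < hook la x1 y.
Proof.
move=> Hs Hb Hx; have := box_col Hs Hb.
have := @row_mono la x1 x2 Hs ltac:(lia).
move: Hb; rewrite /is_box /hook; lia.
Qed.
Lemma cover la x y v : sorted geq la -> is_box la x y -> 1 <= v <= hook la x y ->
  (exists2 y', y <= y' <= row la x & hook la x y' = v) \/
  (exists2 x', x < x' <= col la y & hook la x' y + v = hook la x y).
Proof.
move=> Hs Hb Hv.
have Hxc := box_col Hs Hb.
move: (Hb) => /and4P[Hx1 Hxs Hy1 Hyr].
set h := hook la x y.
set R := [seq hook la x y' | y' <- iota y (row la x - y + 1)].
set C := [seq h - hook la x' y | x' <- iota x.+1 (col la y - x)].
have memR : forall y', y' \in iota y (row la x - y + 1) -> is_box la x y' /\ y <= y'.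
  move=> y'; rewrite mem_iota => Hy'; split; last lia.
  rewrite /is_box Hx1 Hxs /=; apply/andP; split; lia.
have memC : forall x', x' \in iota x.+1 (col la y - x) -> is_box la x' y /\ x < x'.
  move=> x'; rewrite mem_iota => Hx'; split; last lia.
  apply: box_of_col => //; lia.
have Rle : forall y', is_box la x y' -> y <= y' -> hook la x y' <= h.
  move=> y' Hb' Hyy; rewrite leq_eqVlt in Hyy; case/orP: Hyy => [/eqP <-|Hlt] //.
  by apply: ltnW; apply: hook_row_lt => //; lia.
have Clt : forall x', is_box la x' y -> x < x' -> hook la x' y < h.
  by move=> x' Hb' Hxx; apply: hook_col_lt => //; lia.
have uR : uniq R.
  rewrite map_inj_in_uniq ?iota_uniq // => y1 y2 H1 H2 Heq.
  have [B1 _] := memR _ H1; have [B2 _] := memR _ H2.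
  case: (ltngtP y1 y2) => // Hc.
    by have := hook_row_lt Hs B2 (ltac:(move: B1 => /and4P[]; lia) : 1 <= y1 < y2); lia.
  by have := hook_row_lt Hs B1 (ltac:(move: B2 => /and4P[]; lia) : 1 <= y2 < y1); lia.
have uC : uniq C.
  rewrite map_inj_in_uniq ?iota_uniq // => x1 x2 H1 H2 Heq.
  have [B1 L1] := memC _ H1; have [B2 L2] := memC _ H2.
  have := Clt _ B1 L1; have := Clt _ B2 L2 => C2 C1.
  case: (ltngtP x1 x2) => // Hc.
    by have := hook_col_lt Hs B2 (ltac:(lia) : 1 <= x1 < x2); lia.
  by have := hook_col_lt Hs B1 (ltac:(lia) : 1 <= x2 < x1); lia.
have dRC : ~~ has (mem R) C.
  apply/hasPn => w /mapP[x' Hx' ->{w}]; apply/mapP => [[y' Hy' Heq]].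
  have [Bx Lx] := memC _ Hx'; have [By Ly] := memR _ Hy'.
  have := Clt _ Bx Lx.
  have Hcy := box_col Hs By; have Hcx := box_col Hs Bx.
  move: (Bx) (By) => /and4P[_ _ _ Hrx] /and4P[_ _ _ Hry].
  have Hcr := col_row Hs (ltac:(lia) : 1 <= x') (ltac:(lia) : 1 <= y').
  have := col_mono la Ly.
  move: Heq Hcr; rewrite /h /hook.
  case: (leqP y' (row la x')) => Hc /= Heq Hcr.
    have : x' <= col la y' by rewrite Hcr.
    lia.
  have : col la y' < x' by rewrite ltnNge Hcr.
  lia.
have us : uniq (R ++ C) by rewrite cat_uniq uR uC dRC.
have sub : {subset R ++ C <= iota 1 h}.
  move=> w; rewrite mem_cat => /orP[] /mapP.
    move=> [y' Hy' ->]; have [B L] := memR _ Hy'; rewrite mem_iota.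
    have := Rle _ B L; rewrite /hook; lia.
  move=> [x' Hx' ->]; have [B L] := memC _ Hx'; rewrite mem_iota.
  have := Clt _ B L; rewrite /hook; lia.
have sz : size (iota 1 h) <= size (R ++ C).
  by rewrite size_cat !size_map !size_iota /h /hook; lia.
have [_ Heq] := uniq_min_size us sub sz.
have : v \in R ++ C by rewrite Heq mem_iota; lia.
rewrite mem_cat => /orP[] /mapP.
  move=> [y' Hy' ->]; left; exists y' => //; have [B L] := memR _ Hy'.
  move: B => /and4P[]; lia.
move=> [x' Hx' ->]; right; exists x'.
  by have [B L] := memC _ Hx'; have := box_col Hs B; lia.
have [B L] := memC _ Hx'; have := Clt _ B L; lia.
Qed.

Lemma modeq_shift l a b c d : a + c = b + d ->
  (a == b %[mod l]) = (d == c %[mod l]).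
Proof.
move=> H; rewrite -(eqn_modDr c) H addnC [b + c]addnC eqn_modDr //.
Qed.

Lemma col1 la : all (fun p => 0 < p) la -> col la 1 = size la.
Proof. move=> Ha; rewrite /col -count_predT; apply: eq_in_count => p Hp; exact: (allP Ha). Qed.

Lemma hook_ident la x y : sorted geq la -> all (fun p => 0 < p) la -> is_box la x y ->
  hook la x y + (y.-1 + size la) = hook la x 1 + col la y.
Proof.
move=> Hs Ha Hb; have := box_col Hs Hb; have := col1 Ha; have := col_mono la (ltac:(move: Hb => /and4P[]; lia) : 1 <= y).
move: Hb; rewrite /is_box /hook; lia.
Qed.

Lemma del_char l la x y : sorted geq la -> all (fun p => 0 < p) la -> is_box la x y ->
  deleted_col l la y = (hook la x y == hook la x 1 %[mod l]).
Proof.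
move=> Hs Ha Hb.
have Hb1 : is_box la 1 y.
  move: (Hb) => /and4P[H1 H2 H3 H4]; rewrite /is_box H3 /=.
  have := @row_mono la 1 x Hs ltac:(lia); lia.
rewrite /deleted_col.
move: (Hb1) => /and4P[_ _ -> ->] /=.
by rewrite (modeq_shift l (hook_ident Hs Ha Hb)) (modeq_shift l (hook_ident Hs Ha Hb1)).
Qed.

Lemma nth_filter_pos (s : seq nat) i : sorted geq s ->
  nth 0 (filter (fun p => 0 < p) s) i = nth 0 s i.
Proof.
elim: s i => [|a s IH] i Hs /=; first by rewrite !nth_nil.
have Hs' : sorted geq s by case: s Hs {IH} => //= b s /andP[].
case: (posnP a) => Ha /=.
  have Hall := sorted_cons_le Hs.
  have -> : [seq p <- s | 0 < p] = [::].
    apply/eqP; rewrite -size_eq0 size_filter -leqn0 leqNgt -has_count.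
    apply/hasPn => p /(allP Hall); rewrite Ha /=; lia.
  case: i => [|j] /=; rewrite ?Ha ?nth_nil //.
  case: (ltnP j (size s)) => Hj; last by rewrite nth_default.
  by have := allP Hall _ (mem_nth 0 Hj); rewrite Ha leqn0 => /eqP ->.
by case: i => [|j] //=; rewrite IH.
Qed.

Lemma new_col_mono l la p q : p <= q -> new_col l la p <= new_col l la q.
Proof.
move=> H; rewrite /new_col -(subnKC H) iotaD count_cat; exact: leq_addr.
Qed.

Lemma new_col0 l la : new_col l la 0 = 0.
Proof. by []. Qed.

Lemma new_colS l la y : new_col l la y.+1 = new_col l la y + ~~ deleted_col l la y.+1.
Proof.
rewrite /new_col; have -> : iota 1 y.+1 = iota 1 y ++ [:: y.+1] by rewrite -[in LHS](addn1 y) iotaD add1n.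
by rewrite count_cat /= addn0.
Qed.

Lemma new_col_split l la y r : new_col l la (y + r) =
  new_col l la y + count (fun c => ~~ deleted_col l la c) (iota y.+1 r).
Proof. by rewrite /new_col iotaD count_cat add1n. Qed.

Lemma new_col_nd l la y : 1 <= y -> ~~ deleted_col l la y -> new_col l la y = (new_col l la y.-1).+1.
Proof. by case: y => // y _ H; rewrite new_colS H addn1. Qed.

Lemma row_Phi l la x : sorted geq la -> row (Phi_tilde l la) x = new_col l la (row la x).
Proof.
move=> Hs; rewrite /row /Phi_tilde nth_filter_pos.
  case: (ltnP x.-1 (size la)) => Hx; first by rewrite (nth_map 0).
  by rewrite !nth_default ?size_map.
apply: homo_sorted Hs => a b /=; exact: new_col_mono.
Qed.

Lemma col_Phi l la y : 1 <= y -> ~~ deleted_col l la y ->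
  col (Phi_tilde l la) (new_col l la y) = col la y.
Proof.
move=> Hy Hd; rewrite /col /Phi_tilde count_filter count_map; apply: eq_count => p /=.
have Hn := new_col_nd Hy Hd.
case: (leqP y p) => Hyp.
  have := new_col_mono l la Hyp; rewrite Hn => H; apply/andP; split; lia.
have := new_col_mono l la (ltac:(lia) : p <= y.-1).
rewrite Hn; lia.
Qed.

Lemma is_box_pos s x y : 1 <= x -> 1 <= y -> y <= row s x -> is_box s x y.
Proof.
move=> H1 H2 H3; rewrite /is_box H1 H2 H3 /= andbT.
case: (ltnP (size s) x) => // Hx; move: H3; rewrite /row nth_default; lia.
Qed.

Lemma hook_Phi l la x y : sorted geq la -> is_box la x y -> ~~ deleted_col l la y ->
  is_box (Phi_tilde l la) x (new_col l la y) /\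
  hook (Phi_tilde l la) x (new_col l la y) +
    count (deleted_col l la) (iota y.+1 (row la x - y)) = hook la x y.
Proof.
move=> Hs Hb Hd; move: (Hb) => /and4P[Hx1 Hxs Hy1 Hyr].
have Hn := new_col_nd Hy1 Hd.
have Hsp := new_col_split l la y (row la x - y).
rewrite subnKC // in Hsp.
have Hc : count (deleted_col l la) (iota y.+1 (row la x - y)) +
  count (fun c => ~~ deleted_col l la c) (iota y.+1 (row la x - y)) = row la x - y.
  by have := count_predC (deleted_col l la) (iota y.+1 (row la x - y)); rewrite size_iota.
have Hr := row_Phi l x Hs.
split.
  apply: is_box_pos => //; first lia.
  rewrite Hr; exact: new_col_mono.
rewrite /hook Hr col_Phi //.
move: Hc Hsp; lia.
Qed.

Lemma hook_inj_row la x y1 y2 : sorted geq la -> is_box la x y1 -> is_box la x y2 ->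
  hook la x y1 = hook la x y2 -> y1 = y2.
Proof.
move=> Hs B1 B2 Heq; case: (ltngtP y1 y2) => // Hc.
  by have := hook_row_lt Hs B2 (ltac:(move: B1 => /and4P[]; lia) : 1 <= y1 < y2); lia.
by have := hook_row_lt Hs B1 (ltac:(move: B2 => /and4P[]; lia) : 1 <= y2 < y1); lia.
Qed.

Lemma hook_pos la x y : 0 < hook la x y.
Proof. rewrite /hook; lia. Qed.

Lemma part1_exists l la x : 2 <= l -> sorted geq la -> all (fun p => 0 < p) la ->
  is_core l la -> 1 <= x <= size la ->
  exists2 y', 1 <= y' <= row la x & [/\ deleted_col l la y', skew_box l la x y' & hook la x y' < l].
Proof.
move=> Hl Hs Ha Hc /andP[Hx1 Hxs].
have Hr1 : 1 <= row la x.
  by rewrite /row; apply: (allP Ha); apply: mem_nth; case: x Hx1 Hxs.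
have Hb1 : is_box la x 1 by rewrite /is_box Hx1 Hxs Hr1.
set H := hook la x 1.
have Hr0 : 0 < H %% l.
  have := Hc _ _ Hb1; rewrite /dvdn lt0n; done.
have Hrl : H %% l < l by rewrite ltn_mod; lia.
have := @cover la x 1 (H %% l) Hs Hb1 ltac:(rewrite leq_mod andbT //).
case=> [[y' Hy' Heq]|[x' Hx' Heq]].
  have By : is_box la x y' by rewrite /is_box Hx1 Hxs /=; apply/andP; split; lia.
  exists y'; first lia.
  split; last by rewrite Heq.
    by rewrite (del_char l Hs Ha By) Heq modn_mod.
  by rewrite /skew_box By Heq ltnW.
exfalso.
have Bx : is_box la x' 1 by apply: box_of_col => //; lia.
have := Hc _ _ Bx; move=> /negP; apply.
have -> : hook la x' 1 = H %/ l * l.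
  have := divn_eq H l; rewrite -/H; lia.
exact: dvdn_mull.
Qed.

Lemma part1 l la x : 2 <= l -> sorted geq la -> all (fun p => 0 < p) la ->
  is_core l la -> 1 <= x <= size la ->
  count (fun y => deleted_col l la y && skew_box l la x y) (iota 1 (row la x)) = 1.
Proof.
move=> Hl Hs Ha Hc Hx.
have [ys Hys [Dys Sys Lys]] := part1_exists Hl Hs Ha Hc Hx.
have Bys : is_box la x ys by move: Sys => /andP[].
rewrite (@eq_in_count _ _ (pred1 ys)); last first.
  move=> y; rewrite mem_iota => Hy /=.
  apply/idP/eqP => [/andP[Dy /andP[By Ly]]|->]; last by rewrite Dys Sys.
  apply: (hook_inj_row Hs By Bys).
  have Hny := Hc _ _ By; rewrite /dvdn in Hny.
  have Hyl : hook la x y < l.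
    rewrite ltn_neqAle Ly andbT; apply/eqP => E; move: Hny; rewrite E modnn.
    done.
  rewrite (del_char l Hs Ha By) in Dy; rewrite (del_char l Hs Ha Bys) in Dys.
  move/eqP: Dy; move/eqP: Dys; rewrite (modn_small Hyl) (modn_small Lys).
  by move=> -> ->.
have Hm : ys \in iota 1 (row la x) by rewrite mem_iota; lia.
by rewrite (count_uniq_mem _ (iota_uniq 1 (row la x))) Hm.
Qed.

Lemma part2 l la x y : 2 <= l -> sorted geq la -> all (fun p => 0 < p) la ->
  is_core l la -> is_box la x y -> ~~ deleted_col l la y ->
  skew_box l la x y = skew_box l.-1 (Phi_tilde l la) x (new_col l la y).
Proof.
move=> Hl Hs Ha Hc Hb Hd.
have [HbP HhP] := hook_Phi Hs Hb Hd.
move: (Hb) => /and4P[Hx1 Hxs Hy1 Hyr].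
set I := iota y.+1 (row la x - y) in HhP.
set N := count _ I in HhP.
set h := hook la x y in HhP.
set m := hook _ _ _ in HhP.
have memI : forall z, z \in I -> is_box la x z /\ y < z.
  move=> z; rewrite mem_iota => Hz; split; last lia.
  rewrite /is_box Hx1 Hxs /=; apply/andP; split; lia.
have Ha1 : h = l -> 0 < N.
  move=> Hh.
  have [ys Hys [Dys Sys Lys]] := part1_exists Hl Hs Ha Hc (ltac:(lia) : 1 <= x <= size la).
  have Bys : is_box la x ys by move: Sys => /andP[].
  have Hlt : y < ys.
    rewrite ltnNge; apply/negP => Hle.
    move: Hle; rewrite leq_eqVlt => /orP[/eqP E|E].
      by move: Lys; rewrite E -/h Hh ltnn.
    by have := hook_row_lt Hs Hb (ltac:(lia) : 1 <= ys < y); lia.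
  rewrite /N -has_count; apply/hasP; exists ys => //.
  rewrite mem_iota; move: Hys; lia.
have Hb2 : N <= (h - 2) %/ l + 1.
  have -> : N = size (filter (deleted_col l la) I) by rewrite size_filter.
  rewrite -(size_map (fun z => (hook la x z).-1 %/ l)) -(size_iota 0 ((h - 2) %/ l + 1)).
  apply: uniq_leq_size.
    rewrite map_inj_in_uniq; first by apply: filter_uniq; exact: iota_uniq.
    move=> z1 z2; rewrite !mem_filter => /andP[D1 I1] /andP[D2 I2] Heq.
    have [B1 _] := memI _ I1; have [B2 _] := memI _ I2.
    apply: (hook_inj_row Hs B1 B2).
    rewrite (del_char l Hs Ha B1) in D1; rewrite (del_char l Hs Ha B2) in D2.
    have E : hook la x z1 == hook la x z2 %[mod l] by rewrite (eqP D1) (eqP D2).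
    have P1 := hook_pos la x z1; have P2 := hook_pos la x z2.
    have E' : (hook la x z1).-1 %% l = (hook la x z2).-1 %% l.
      apply/eqP; rewrite -(eqn_modDr 1) !addn1 !prednK //.
    move: (divn_eq (hook la x z1).-1 l) (divn_eq (hook la x z2).-1 l).
    rewrite Heq E'; move: P1 P2; lia.
  move=> w /mapP[z]; rewrite mem_filter => /andP[_ Iz] ->.
  have [Bz Lz] := memI _ Iz.
  have := hook_row_lt Hs Bz (ltac:(lia) : 1 <= y < z); rewrite -/h => Hlt.
  have Hp := hook_pos la x z.
  have Hdv : (hook la x z).-1 %/ l <= (h - 2) %/ l by apply: leq_div2r; rewrite -subn1; lia.
  rewrite mem_iota; move: Hdv; set t := _ %/ l; set u := _ %/ l; lia.
rewrite /skew_box Hb HbP /= -subn1.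
have Hq := divn_eq (h - 2) l.
have Hqm := ltn_pmod (h - 2) (ltac:(lia) : 0 < l).
move: Hb2 Hq Hqm; set q := (h - 2) %/ l; set r := (h - 2) %% l => Hb2 Hq Hqm.
case: (ltngtP h l) => Hhl; rewrite -/m.
- symmetry; lia.
- symmetry; apply/negbTE; rewrite -ltnNge.
  case: (posnP q) => Hq0.
    lia.
  nia.
- have := Ha1 Hhl => HN.
  symmetry; lia.
Qed.

Theorem mainTheorem9 (l k : nat) (la : seq nat) :
  2 <= l -> 1 <= k -> is_partition la -> size la = k -> is_core l la ->
  (forall x, 1 <= x <= k ->
     count (fun y => deleted_col l la y && skew_box l la x y)
           (iota 1 (row la x)) = 1) /\
  (forall x y, is_box la x y -> ~~ deleted_col l la y ->
     skew_box l la x y = skew_box l.-1 (Phi_tilde l la) x (new_col l la y)).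
Proof.
move=> Hl Hk [Hs Ha] Hsz Hc; split.
  by move=> x Hx; apply: part1 => //; rewrite Hsz.
by move=> x y Hb Hd; apply: part2.
Qed.
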